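(* Let $F\in Sh^{s,0}_{\Lambda_L}(X)\cap Mod(X)$ be reduced and let $f=(f_1,\dots,f_r)$ and $g=(g_1,\dots,g_r)$ be two local trivializations for $F$. Then $\epsilon_{(F,f)}$ and $\epsilon_{(F,g)}$ are equivalent under the dilation action, i.e. they define the same element of $\mathcal{A}ug$.
   Context: $X=\mathbb{R}^3$ or $S^3$, $k$ a field, $(L,L')$ an $r$-component framed oriented link, $L=K_1\sqcup\dots\sqcup K_r$. Sheaves in $Sh^{s,0}_{\Lambda_L}(X)\cap Mod(X)$ (sheaves of $k$-vector spaces with micro-support at infinity in the unit conormal of $L$, microlocally simple with Morse cone in degree $0$) are equivalent to data $(V,\rho,W_s,\rho_s,T_s)$: $\rho:\pi_1(X\setminus L)\to GL(V)$ the local system on the complement, $W_s$ the stalk on $K_s$, $T_s:W_s\to V$ the injective restriction map with one-dimensional cokernel, the meridian of $K_s$ acting trivially on its image and the longitude action $\rho(\ell_s)$ intertwining with the monodromy of $K_s$; we view $W_s\subset V$. $F$ is reduced if it admits no nonzero locally constant subsheaf, no nonzero locally constant quotient, and no direct summand $F'$ that is the kernel of a surjection from a nonzero locally constant sheaf onto $i'_*k_{L''}$ for a sublink $L''$. $A_c$ denotes trivialized parallel transport along a path $c$, $M_t=\rho(m_t)$. A local trivialization is an $r$-tuple of surjective linear maps $f_s:V\to k$ with $f_s|_{W_s}=0$. $\epsilon_{(F,f)}:\mathrm{Cord}(L)\to k$ is the augmentation of the framed cord algebra given on generators by $\epsilon(c_{st})=f_sA_{c_{st}}(\mathrm{id}_V-M_t)f_t^{-1}$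 for framed cords $c_{st}$ from the framing curve of $K_s$ to that of $K_t$, $\epsilon(\lambda_s)=f_sA_{\ell_s}f_s^{-1}$, $\epsilon(\mu_s)=1-f_s(\mathrm{id}_V-M_s)f_s^{-1}$, where $f_s^{-1}$ is any right inverse of $f_s$ (the result is independent of this choice). Dilation: $d\in(k^* )^r$ sends $\epsilon$ to $\epsilon'$ with $\epsilon'(\lambda_s)=\epsilon(\lambda_s)$, $\epsilon'(\mu_s)=\epsilon(\mu_s)$, $\epsilon'(c_{st})=\frac{d_s}{d_t}\epsilon(c_{st})$; $\mathcal{A}ug$ is the set of augmentations modulo this action. *)

(* Defs.v *)
From HB Require Import structures.
From mathcomp Require Import all_boot all_order all_algebra.
Set Implicit Arguments. Unset Strict Implicit. Unset Printing Implicit Defensive.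
Import GRing.Theory.
Local Open Scope ring_scope.

(* Algebraic data (V, rho, W_s, rho_s, T_s) describing a sheaf F in
   Sh^{s,0}_{Lambda_L}(X) \cap Mod(X), for an r-component framed link.
   - V : the stalk of the local system on X \ L (an arbitrary k-vector space);
   - W s : the stalk on K_s, viewed as a subspace of V (via the injective T_s);
   - M s = rho(m_s) : meridian monodromy;  Lam s = rho(l_s) = A_{l_s} :
     trivialized longitude monodromy;
   - cord s t : the framed cords from the framing curve of K_s to that of K_t,
     and A c : trivialized parallel transport along c. *)

Definition subspace (k : fieldType) (V : lmodType k) (W : {pred V}) : Prop :=
  0 \in W /\ forall (a : k) (u v : V), u \in W -> v \in W -> a *: u + v \in W.

Definition codim_one (k : fieldType) (V : lmodType k) (W : {pred V}) : Prop :=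
  exists v : V, v \notin W /\
    forall x : V, exists (a : k) (w : V), w \in W /\ x = a *: v + w.

Definition sheaf_data (k : fieldType) (V : lmodType k) (r : nat)
  (cord : 'I_r -> 'I_r -> Type)
  (W : 'I_r -> {pred V}) (M Lam : 'I_r -> {linear V -> V})
  (A : forall s t : 'I_r, cord s t -> {linear V -> V}) : Prop :=
  [/\ forall s, subspace (W s),
      forall s, codim_one (W s),
      forall s w, w \in W s -> M s w = w,
      (* the longitude action intertwines with the monodromy of K_s,
         in particular it preserves the image of T_s *)
      forall s w, w \in W s -> Lam s w \in W s
    &
      [/\ forall s, bijective (M s), forall s, bijective (Lam s)
         & forall s t (c : cord s t), bijective (A s t c)]].

Definition local_triv (k : fieldType) (V : lmodType k) (r : nat)
  (W : 'I_r -> {pred V}) (f : 'I_r -> {scalar V}) : Prop :=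
  forall s, (forall x : k, exists v : V, f s v = x) /\
            (forall w, w \in W s -> f s w = 0).

(* A right inverse of f_s : V -> k is the linear map x |-> x *: v with
   f_s v = 1; it is encoded by the vector v = finv s. *)
Definition right_inv (k : fieldType) (V : lmodType k) (r : nat)
  (f : 'I_r -> {scalar V}) (finv : 'I_r -> V) : Prop :=
  forall s, f s (finv s) = 1.

Definition eps_cord (k : fieldType) (V : lmodType k) (r : nat)
  (cord : 'I_r -> 'I_r -> Type) (M : 'I_r -> {linear V -> V})
  (A : forall s t : 'I_r, cord s t -> {linear V -> V})
  (f : 'I_r -> {scalar V}) (finv : 'I_r -> V) (s t : 'I_r) (c : cord s t) : k :=
  f s (A s t c (finv t - M t (finv t))).

Definition eps_lambda (k : fieldType) (V : lmodType k) (r : nat)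
  (Lam : 'I_r -> {linear V -> V})
  (f : 'I_r -> {scalar V}) (finv : 'I_r -> V) (s : 'I_r) : k :=
  f s (Lam s (finv s)).

Definition eps_mu (k : fieldType) (V : lmodType k) (r : nat)
  (M : 'I_r -> {linear V -> V})
  (f : 'I_r -> {scalar V}) (finv : 'I_r -> V) (s : 'I_r) : k :=
  1 - f s (finv s - M s (finv s)).

Definition dilation_equiv (k : fieldType) (r : nat)
  (cord : 'I_r -> 'I_r -> Type)
  (e1c e2c : forall s t : 'I_r, cord s t -> k)
  (e1l e2l e1m e2m : 'I_r -> k) : Prop :=
  exists d : 'I_r -> k,
    [/\ forall s, d s != 0,
        forall s, e2l s = e1l s,
        forall s, e2m s = e1m s
      & forall s t (c : cord s t), e2c s t c = d s / d t * e1c s t c].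

(* Main.v *)
Require Import Defs.
From HB Require Import structures.
From mathcomp Require Import all_boot all_order all_algebra.
Import GRing.Theory.
Local Open Scope ring_scope.

Section Aux.
Variables (k : fieldType) (V : lmodType k) (W : {pred V}) (f : {scalar V}).
Hypothesis HW : subspace W.
Hypothesis HC : codim_one W.
Hypothesis Hsurj : forall x : k, exists v : V, f v = x.
Hypothesis Hvan : forall w, w \in W -> f w = 0.

Lemma ker_in_W x : f x = 0 -> x \in W.
Proof.
case: HC => v [vW Hv] fx0.
have fv0 : f v != 0.
  have [y fy1] := Hsurj 1.
  have [b [w [wW ey]]] := Hv y.
  apply/eqP => fv0; move: fy1; rewrite ey linearD linearZ /= fv0 (Hvan _ wW).
  by rewrite mulr0 addr0 => /esym/eqP; rewrite oner_eq0.
have [a [w [wW ex]]] := Hv x.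
move: fx0; rewrite ex linearD linearZ /= (Hvan _ wW) addr0 => /eqP.
rewrite mulf_eq0 (negbTE fv0) orbF => /eqP ->.
by rewrite scale0r add0r.
Qed.

Lemma decomp (u x : V) : f u = 1 -> x - f x *: u \in W.
Proof.
move=> fu; apply: ker_in_W.
by rewrite linearB linearZ /= fu mulr1 subrr.
Qed.
End Aux.

Theorem proposition4p6 (k : fieldType) (V : lmodType k) (r : nat)
  (cord : 'I_r -> 'I_r -> Type)
  (W : 'I_r -> {pred V}) (M Lam : 'I_r -> {linear V -> V})
  (A : forall s t : 'I_r, cord s t -> {linear V -> V})
  (HF : sheaf_data W M Lam A)
  (f g : 'I_r -> {scalar V})
  (Hf : local_triv W f) (Hg : local_triv W g)
  (finv ginv : 'I_r -> V)
  (Hfi : right_inv f finv) (Hgi : right_inv g ginv) :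
  dilation_equiv
    (eps_cord M A f finv) (eps_cord M A g ginv)
    (eps_lambda Lam f finv) (eps_lambda Lam g ginv)
    (eps_mu M f finv) (eps_mu M g ginv).
Proof.
case: HF => HW HC HM HL _.
pose c s := g s (finv s).
pose a s := f s (ginv s).
have Pw s x : x - f s x *: finv s \in W s.
  exact: (@decomp k V (W s) (f s) (HC s) (Hf s).1 (Hf s).2 _ x (Hfi s)).
have gf s x : g s x = f s x * c s.
  have := (Hg s).2 _ (Pw s x).
  by rewrite linearB linearZ /= => /eqP; rewrite subr_eq0 => /eqP.
have ac s : a s * c s = 1 by rewrite -gf Hgi.
have cinv s : (c s)^-1 = a s.
  by rewrite -[a s]mulr1 -(mulfV (x := c s)) ?mulrA ?ac ?mul1r //;
     apply/eqP => c0; move: (ac s); rewrite c0 mulr0 => /eqP; rewrite eq_sym oner_eq0.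
set w := fun s => ginv s - a s *: finv s.
have wW s : w s \in W s by exact: Pw.
have gdec s : ginv s = a s *: finv s + w s by rewrite /w addrC subrK.
have gM s : ginv s - M s (ginv s) = a s *: (finv s - M s (finv s)).
  rewrite {2}gdec linearD linearZ /= (HM _ _ (wW s)) {1}gdec.
  by rewrite scalerBr opprD addrACA subrr addr0.
exists c; split.
- move=> s; apply/eqP => c0; move: (ac s); rewrite c0 mulr0 => /eqP.
  by rewrite eq_sym oner_eq0.
- move=> s; rewrite /eps_lambda gf gdec linearD linearZ /= linearD linearZ /=.
  rewrite ((Hf s).2 _ (HL _ _ (wW s))) addr0 mulrAC ac mul1r.
  by [].
- move=> s; rewrite /eps_mu gf gM linearZ /= mulrAC ac mul1r.
  by [].
- move=> s t cc; rewrite /eps_cord gf gM linearZ /= linearZ /= cinv.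
  by rewrite mulrC mulrA.
Qed.
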